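(* Let $\Omega\subset\mathbb{R}^d$ be a bounded Lipschitz domain, $0<\alpha\le1$, $\delta,M_1,M_2>0$, and let $\varrho=\varrho(\Omega,\delta,M_1,M_2,\alpha)>0$ be the radius of guaranteed local injectivity described in the context. Then for every $0<\gamma<\frac{\varrho}{2}$ there exists $\lambda>0$, depending only on $\gamma,d,\Omega,\delta,\alpha,M_1,M_2$ (and not on the maps below), such that for all $y,z\in C^{1,\alpha}(\Omega;\mathbb{R}^d)$ that both satisfy $\det\nabla(\cdot)\ge\delta$, $|\nabla(\cdot)|\le M_1$ on $\Omega$ and $\|\nabla(\cdot)\|_{C^\alpha(\Omega)}\le M_2$, and with $\|y-z\|_{L^\infty}\le\lambda$, we have $$\tilde P^{(\gamma)}_y(0)\subset P_z(0),$$ where $$\tilde P^{(\gamma)}_y(0):=\{x_1\in\Omega:\ \exists x_2\in\Omega\text{ with }\operatorname{dist}(x_2,\partial\Omega)>\gamma,\ y(x_1)=y(x_2),\ |x_1-x_2|>\tfrac{\varrho}{2}+\gamma\},$$ $$P_z(0):=\{x\in\Omega:\ \exists\tilde x\in\Omega\text{ with } z(x)=z(\tilde x)\text{ and }|x-\tilde x|>\tfrac{\varrho}{2}\}.$$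
   Context: The radius $\varrho>0$ depends only on $\Omega,\delta,M_1,M_2,\alpha$ and has the property that every $y\in C^{1,\alpha}(\Omega;\mathbb{R}^d)$ with $\det\nabla y\ge\delta$, $|\nabla y|\le M_1$, $\|\nabla y\|_{C^\alpha(\Omega)}\le M_2$ is injective on $B_\varrho(\bar x)\cap\Omega$ for every $\bar x\in\bar\Omega$, with $\frac12\frac{\delta}{M_1^{d-1}}|x_1-x_2|\le|y(x_1)-y(x_2)|\le M_1\sqrt{1+L^2}|x_1-x_2|$ for $x_1,x_2\in B_\varrho(\bar x)\cap\Omega$ ($L$ bounding the local Lipschitz constants of $\partial\Omega$). Norms are Euclidean. *)

(* Defs.v *)
From HB Require Import structures.
From mathcomp Require Import all_boot all_order all_algebra.
From mathcomp Require Import all_classical all_reals all_analysis.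
Set Implicit Arguments. Unset Strict Implicit. Unset Printing Implicit Defensive.
Import Order.TTheory GRing.Theory Num.Theory.
Import numFieldNormedType.Exports.
Local Open Scope classical_set_scope.
Local Open Scope ring_scope.

Section Defs.
Variables (R : realType) (d : nat).
Notation V := 'rV[R]_d.

Definition edot (u v : V) : R := \sum_(i < d) u ord0 i * v ord0 i.
Definition enorm (u : V) : R := Num.sqrt (edot u u).
Definition mnorm (A : 'M[R]_d) : R := Num.sqrt (\sum_(i < d) \sum_(j < d) A i j ^+ 2).

(* Gradient matrix: (grad y x) i j = partial_j y_i (x). *)
Definition grad (y : V -> V) (x : V) : 'M[R]_d :=
  \matrix_(i < d, j < d) ('d y x (delta_mx ord0 j : V)) ord0 i.

Definition bdry (O : set V) : set V := closure O `\` interior O.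

Definition eball (c : V) (r : R) : set V := [set x | enorm (x - c) < r].

(* Bounded Lipschitz domain whose boundary is locally the subgraph of a
   Lipschitz function with Lipschitz constant at most L. *)
Definition lipschitz_domain (L : R) (O : set V) : Prop :=
  [/\ open O, connected O,
      (exists K : R, forall x, O x -> enorm x <= K) &
      forall p, bdry O p ->
        exists r : R, 0 < r /\
        exists e : V, enorm e = 1 /\
        exists g : V -> R,
          (forall u v, `|g u - g v| <= L * enorm (u - v)) /\
          (forall x, enorm (x - p) < r ->
             (O x <-> edot (x - p) e < g ((x - p) - edot (x - p) e *: e)))].

(* y in C^{1,alpha}(O; R^d) with det grad y >= delta, |grad y| <= M1 and
   ||grad y||_{C^alpha(O)} = sup |grad y| + [grad y]_alpha <= M2. *)
Definition admissible (O : set V) (alpha delta M1 M2 : R) (y : V -> V) : Prop :=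
  [/\ (forall x, O x -> differentiable y x),
      (forall x, O x -> delta <= \det (grad y x)),
      (forall x, O x -> mnorm (grad y x) <= M1) &
      exists A B : R, [/\ A + B <= M2,
        (forall x, O x -> mnorm (grad y x) <= A) &
        (forall x1 x2, O x1 -> O x2 ->
           mnorm (grad y x1 - grad y x2) <= B * powR (enorm (x1 - x2)) alpha)]].

Definition injectivity_radius (O : set V) (L alpha delta M1 M2 rho : R) : Prop :=
  forall y, admissible O alpha delta M1 M2 y ->
  forall xbar, closure O xbar ->
  forall x1 x2, O x1 -> O x2 -> eball xbar rho x1 -> eball xbar rho x2 ->
    2^-1 * (delta / M1 ^+ d.-1) * enorm (x1 - x2) <= enorm (y x1 - y x2) /\
    enorm (y x1 - y x2) <= M1 * Num.sqrt (1 + L ^+ 2) * enorm (x1 - x2).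

Definition dist_bdry_gt (O : set V) (x : V) (gamma : R) : Prop :=
  exists eta : R, gamma < eta /\ forall b, bdry O b -> eta <= enorm (x - b).

Definition Ptilde (O : set V) (rho gamma : R) (y : V -> V) : set V :=
  [set x1 | O x1 /\ exists x2, [/\ O x2, dist_bdry_gt O x2 gamma,
       y x1 = y x2 & rho / 2 + gamma < enorm (x1 - x2)]].

Definition P0 (O : set V) (rho : R) (z : V -> V) : set V :=
  [set x | O x /\ exists xt, [/\ O xt, z x = z xt & rho / 2 < enorm (x - xt)]].

End Defs.

(* Main.v *)
Require Import Defs.
From HB Require Import structures.
From mathcomp Require Import all_boot all_order all_algebra.
From mathcomp Require Import all_classical all_reals all_analysis.
From mathcomp Require Import ring lra.
Import Order.TTheory GRing.Theory Num.Theory.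
Import numFieldNormedType.Exports.
Local Open Scope classical_set_scope.
Local Open Scope ring_scope.

Section Enorm.
Variables (R : realType) (d : nat).
Notation V := 'rV[R]_d.
Implicit Types (u v w : V).

Lemma edotC u v : edot u v = edot v u.
Proof. by apply: eq_bigr => i _; rewrite mulrC. Qed.

Lemma edotDl u v w : edot (u + v) w = edot u w + edot v w.
Proof. by rewrite /edot -big_split; apply: eq_bigr => i _; rewrite !mxE mulrDl. Qed.

Lemma edotZl (k : R) u v : edot (k *: u) v = k * edot u v.
Proof. by rewrite /edot mulr_sumr; apply: eq_bigr => i _; rewrite !mxE mulrA. Qed.

Lemma edotNl u v : edot (- u) v = - edot u v.
Proof. by rewrite -scaleN1r edotZl mulN1r. Qed.

Lemma edot_ge0 u : 0 <= edot u u.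
Proof. by apply: sumr_ge0 => i _; rewrite -expr2 sqr_ge0. Qed.

Lemma enorm_ge0 u : 0 <= enorm u.
Proof. exact: sqrtr_ge0. Qed.

Lemma enorm_sq u : enorm u ^+ 2 = edot u u.
Proof. by rewrite /enorm sqr_sqrtr // edot_ge0. Qed.

Lemma enormZ (k : R) u : enorm (k *: u) = `|k| * enorm u.
Proof.
rewrite /enorm edotZl edotC edotZl mulrA -expr2 sqrtrM ?sqr_ge0 //.
by rewrite sqrtr_sqr.
Qed.

Lemma enormN u : enorm (- u) = enorm u.
Proof. by rewrite -scaleN1r enormZ normrN normr1 mul1r. Qed.

Lemma enormB u v : enorm (u - v) = enorm (v - u).
Proof. by rewrite -enormN opprB. Qed.

Lemma enorm0 : enorm (0 : V) = 0.
Proof. by rewrite -(scale0r (0 : V)) enormZ normr0 mul0r. Qed.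

Lemma edot0 u : edot u u = 0 -> u = 0.
Proof.
move=> h; apply/rowP => i; rewrite mxE.
have H0 : forall j : 'I_d, xpredT j -> 0 <= u ord0 j * u ord0 j.
  by move=> j _; rewrite -expr2 sqr_ge0.
have /eqP := @psumr_eq0P _ _ xpredT (fun i => u ord0 i * u ord0 i) H0 h i isT.
by rewrite mulf_eq0 orbb => /eqP.
Qed.

Lemma enorm_eq0 u : enorm u = 0 -> u = 0.
Proof. by move=> h; apply: edot0; rewrite -enorm_sq h expr0n. Qed.

Lemma edot_young u v (t : R) : 0 < t ->
  2 * edot u v <= t * edot u u + t^-1 * edot v v.
Proof.
move=> t0; rewrite /edot !mulr_sumr -big_split; apply: ler_sum => i _.
set a := u ord0 i; set b := v ord0 i.
have : 0 <= t * (a - t^-1 * b) ^+ 2 by apply: mulr_ge0; [exact: ltW | exact: sqr_ge0].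
have tn : t != 0 by rewrite gt_eqF.
have -> : t * (a - t^-1 * b) ^+ 2 = t * (u ord0 i * u ord0 i) + t^-1 * (v ord0 i * v ord0 i) - 2 * (u ord0 i * v ord0 i).
  by rewrite /a /b; field.
by rewrite subr_ge0.
Qed.

Lemma edot_cs u v : edot u v <= enorm u * enorm v.
Proof.
have [u0|] := eqVneq (enorm u) 0.
  by rewrite u0 mul0r (enorm_eq0 u u0) /edot big1 // => i _; rewrite mxE mul0r.
have [v0|vn un] := eqVneq (enorm v) 0.
  by rewrite v0 mulr0 (enorm_eq0 v v0) /edot big1 // => i _; rewrite mxE mulr0.
have up : 0 < enorm u by rewrite lt_neqAle eq_sym un enorm_ge0.
have vp : 0 < enorm v by rewrite lt_neqAle eq_sym vn enorm_ge0.
have := (@edot_young u v _ (divr_gt0 vp up)).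
rewrite -!enorm_sq invf_div => h.
rewrite -(@ler_pM2l _ 2) //; apply: le_trans h _.
rewrite le_eqVlt; apply/orP; left; apply/eqP; field.
by apply/andP; split; rewrite gt_eqF.
Qed.

Lemma enormD u v : enorm (u + v) <= enorm u + enorm v.
Proof.
rewrite -(@ler_pXn2r _ 2) ?nnegrE ?addr_ge0 ?enorm_ge0 //.
rewrite enorm_sq edotDl (edotC u) (edotC v) !edotDl -!enorm_sq (edotC v u).
have := edot_cs u v; rewrite sqrrD; lra.
Qed.

Lemma enormBtri u v w : enorm (u - w) <= enorm (u - v) + enorm (v - w).
Proof. have -> : u - w = (u - v) + (v - w) by rewrite addrA subrK.
exact: enormD. Qed.

Lemma coord_le_enorm u i : `|u ord0 i| <= enorm u.
Proof.
rewrite -sqrtr_sqr; apply: ler_wsqrtr.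
rewrite /edot (bigD1 i) //= -expr2 lerDl.
by apply: sumr_ge0 => j _; rewrite -expr2 sqr_ge0.
Qed.

Lemma mxnorm_le_enorm u : `|u| <= enorm u.
Proof.
rewrite (_ : `|u| = mx_norm u) // mx_normrE; apply: bigmax_le => [|[i j] _].
  exact: enorm_ge0.
by rewrite /= (ord1 i); apply: coord_le_enorm.
Qed.

Lemma coord_le_mxnorm u i : `|u ord0 i| <= `|u|.
Proof.
rewrite (_ : `|u| = mx_norm u) // mx_normrE; apply/bigmax_geP; right => /=.
by exists (ord0, i).
Qed.

Definition Cd : R := Num.sqrt (d%:R) + 1.

Lemma Cd_gt0 : 0 < Cd.
Proof. by rewrite /Cd ltr_wpDl ?sqrtr_ge0. Qed.

Lemma enorm_le_mxnorm u : enorm u <= Cd * `|u|.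
Proof.
apply: (@le_trans _ _ (Num.sqrt d%:R * `|u|)); last first.
  by rewrite ler_wpM2r ?normr_ge0 // lerDl.
have -> : `|u| = Num.sqrt (`|u| ^+ 2) by rewrite sqrtr_sqr normr_id.
rewrite -sqrtrM ?ler0n //; apply: ler_wsqrtr.
rewrite /edot -[d in d%:R](card_ord d) -sumr_const.
rewrite mulr_suml; apply: ler_sum => i _; rewrite mul1r.
by rewrite -expr2 -real_normK ?num_real // lerXn2r ?nnegrE ?normr_ge0 ?coord_le_mxnorm.
Qed.


Lemma segdist (x x2 : V) (a b : R) :
  `|(x2 + a *: (x - x2)) - (x2 + b *: (x - x2))| = `|a - b| * `|x - x2|.
Proof. by rewrite opprD addrACA subrr add0r -scalerBl normrZ. Qed.

Lemma ball_sub_O (O : set V) (x2 x : V) (eta r : R) : open O -> O x2 ->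
  (forall b, bdry O b -> eta <= enorm (x2 - b)) -> r < eta ->
  enorm (x - x2) <= r -> O x.
Proof.
move=> oO Ox2 Hb reta hx.
have [//|nOx] := pselect (O x).
pose seg := fun t : R => x2 + t *: (x - x2).
pose G := [set t : R | (0 <= t <= 1) /\ forall tau, 0 <= tau <= t -> O (seg tau)].
have G0 : G 0.
  split; first by rewrite lexx ler01.
  move=> tau /andP[a b]; have -> : tau = 0 by apply/le_anti; rewrite a b.
  by rewrite /seg scale0r addr0.
have hsG : has_sup G.
  by split; [exists 0 | exists 1 => t [/andP[_ t1] _]].
pose s := sup G.
have s0 : 0 <= s := sup_upper_bound hsG G0.
have s1 : s <= 1 by apply: ge_sup; [exists 0 | move=> t [/andP[_ t1] _]].
have FA : forall tau, 0 <= tau < s -> O (seg tau).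
  move=> tau /andP[t0 ts].
  have [t Gt lt] := @sup_adherent _ G (s - tau) (ltac:(by rewrite subr_gt0)) hsG.
  apply: Gt.2; rewrite t0 /=; apply: ltW; move: lt; rewrite /s; lra.
pose Dx := `|x - x2| + 1.
have Dx0 : 0 < Dx by rewrite /Dx ltr_wpDl.
have close : forall e, 0 < e -> forall tau, `|tau - s| < e / Dx ->
    ball (seg s) e (seg tau).
  move=> e e0 tau ht; rewrite -ball_normE /= /seg segdist.
  apply: (@le_lt_trans _ _ (`|s - tau| * Dx)).
    by rewrite ler_wpM2l ?normr_ge0 // /Dx lerDl.
  by rewrite -ltr_pdivlMr // distrC.
have nOp : ~ O (seg s).
  move=> Op; move: oO; rewrite openE => /(_ _ Op) /nbhs_ballP [e e0 eO].
  have nearO : forall tau, `|tau - s| < e / Dx -> O (seg tau).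
    by move=> tau ht; apply: eO; apply: close.
  have [s_lt1|] := ltP s 1; last first.
    move=> s1'; have s_eq : s = 1 by apply/le_anti; rewrite s1 s1'.
    by apply: nOx; move: Op; rewrite /seg s_eq scale1r addrC subrK.
  have de0 : 0 < e / Dx by rewrite divr_gt0.
  pose t' := Num.min (s + e / Dx / 2) 1.
  have Gt' : G t'.
    split.
      rewrite ge_min lexx orbT andbT le_min ler01 andbT.
      by rewrite addr_ge0 // ltW // divr_gt0.
    move=> tau /andP[t0 tt'].
    have [ts|st] := ltP tau s; first by apply: FA; rewrite t0 ts.
    apply: nearO; rewrite ger0_norm ?subr_ge0 //.
    move: tt'; rewrite le_min => /andP[h _]; move: h de0; lra.
  have : t' <= s := sup_upper_bound hsG Gt'.
  rewrite /t' ge_min => /orP[|]; last by rewrite leNgt s_lt1.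
  move: de0; lra.
have cl : closure O (seg s).
  move=> B /nbhs_ballP [e e0 eB].
  have de0 : 0 < e / Dx by rewrite divr_gt0.
  have [s_eq0|s_gt0] := eqVneq s 0.
    exists x2; split => //; apply: eB; move: (close e e0 s).
    rewrite subrr normr0 => /(_ de0); rewrite /seg s_eq0 scale0r addr0.
    by [].
  have sp : 0 < s by rewrite lt_neqAle eq_sym s_gt0 s0.
  pose tau := Num.max 0 (s - e / Dx / 2).
  have ts : tau < s by rewrite gt_max sp /=; move: de0; lra.
  have t0 : 0 <= tau by rewrite le_max lexx.
  exists (seg tau); split; first by apply: FA; rewrite t0 ts.
  apply: eB; apply: close => //.
  rewrite ltr0_norm ?subr_lt0 // opprB.
  have : s - e / Dx / 2 <= tau by rewrite le_max lexx orbT.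
  move: de0; lra.
have bp : bdry O (seg s) by split => // /interior_subset.
have := Hb _ bp.
rewrite /seg opprD addrA subrr add0r enormN enormZ ger0_norm //.
have : s * enorm (x - x2) <= r.
  apply: (@le_trans _ _ (1 * enorm (x - x2))); last by rewrite mul1r.
  by rewrite ler_wpM2r ?enorm_ge0.
lra.
Qed.


Lemma d_lin (z : V -> V) x u : 'd z x u = u *m (grad z x)^T.
Proof.
rewrite {1}(row_sum_delta u) linear_sum; apply/rowP => i.
rewrite !mxE summxE; apply: eq_bigr => j _.
by rewrite linearZ !mxE.
Qed.

Lemma local_min_zero (z : V -> V) (xm w : V) (e0 : R) :
  differentiable z xm -> \det (grad z xm) != 0 -> 0 < e0 ->
  (forall y, enorm (y - xm) < e0 -> enorm (z xm - w) <= enorm (z y - w)) ->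
  z xm = w.
Proof.
move=> dz det0 e0p hmin.
have [//|ne] := eqVneq (z xm) w.
pose e := z xm - w.
have en : e != 0 by rewrite subr_eq0.
have ep : 0 < enorm e.
  rewrite lt_neqAle enorm_ge0 andbT eq_sym; apply/eqP => /enorm_eq0 h.
  by move: en; rewrite h eqxx.
pose M := (grad z xm)^T.
have Mu : M \in unitmx by rewrite unitmxE det_tr unitfE.
pose v := (- e) *m invmx M.
have Dv : 'd z xm v = - e by rewrite d_lin mulmxKV.
have hd : derivable z xm v := diff_derivable (v:=v) dz.
have lim : 'D_v z xm = - e by rewrite deriveE.
have cv : (fun h => h^-1 *: ((z \o shift xm) (h *: v) - z xm)) @ 0^' --> - e.
  by rewrite -lim; exact: hd.
have Cp := Cd_gt0.
move/cvgrPdist_lt: cv => /(_ (enorm e / Cd) (divr_gt0 ep Cp)).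
rewrite near_withinE => /nbhs_ballP [eps epsp H].
have epsp' : 0 < eps by [].
have vp : 0 < enorm v + 1 by rewrite ltr_wpDl ?enorm_ge0.
pose h := Num.min (eps / 2) (Num.min (1 / 2) (e0 / (enorm v + 1) / 2)).
have hp : 0 < h by rewrite !lt_min !divr_gt0.
have h_eps : h < eps.
  by apply: (@le_lt_trans _ _ (eps / 2)); [rewrite ge_min lexx | lra].
have h1 : h < 1.
  by apply: (@le_lt_trans _ _ (1 / 2)); [rewrite /h !ge_min lexx /= !orbT | lra].
have hv : h * enorm v < e0.
  have hb : h <= e0 / (enorm v + 1) / 2 by rewrite /h !ge_min lexx !orbT.
  have hb' : h * (enorm v + 1) <= e0 / 2.
    by rewrite -ler_pdivlMr // mulrAC.
  have := enorm_ge0 v; move: hb' hp e0p; nra.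
have Hh := H h.
have : ball 0 eps h by rewrite -ball_normE /= sub0r normrN gtr0_norm.
move/Hh => /(_ (lt0r_neq0 hp)) /=.
set Z := z (h *: v + xm).
set q := h^-1 *: (Z - z xm).
move=> hq.
have hmin' := hmin (h *: v + xm).
have : enorm (h *: v + xm - xm) < e0 by rewrite addrK enormZ gtr0_norm.
move/hmin'; rewrite -/Z -/e => hle.
have hq' : h *: q = Z - z xm by rewrite /q scalerA mulfV ?gt_eqF // scale1r.
have decomp : Z - w = (1 - h) *: e + h *: (q + e).
  rewrite [h *: (q + e)]scalerDr hq' scalerBl scale1r /e.
  set a := h *: (z xm - w).
  rewrite addrACA addNr addr0 addrC addrA subrK //.
have qe : enorm (q + e) < enorm e.
  apply: (@le_lt_trans _ _ (Cd * `|q + e|)); first exact: enorm_le_mxnorm.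
  by rewrite -ltr_pdivlMl // mulrC -normrN opprD addrC.
have : enorm (Z - w) < enorm e.
  rewrite decomp; apply: (@le_lt_trans _ _ (enorm ((1 - h) *: e) + enorm (h *: (q + e)))).
    exact: enormD.
  rewrite !enormZ (gtr0_norm hp) ger0_norm ?subr_ge0 ?ltW //.
  move: qe hp h1 ep; nra.
by rewrite ltNge hle.
Qed.


Lemma enorm_lip (a b : V) : `|enorm a - enorm b| <= enorm (a - b).
Proof.
rewrite ler_norml; apply/andP; split.
  have := enormD (b - a) a; rewrite subrK enormB; lra.
have := enormD (a - b) b; rewrite subrK; lra.
Qed.

Lemma ball_image (O : set V) (z : V -> V) (x2 w : V) (r c : R) :
  0 < r -> 0 < c ->
  (forall x, O x -> differentiable z x) ->
  (forall x, O x -> \det (grad z x) != 0) ->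
  (forall x, enorm (x - x2) <= r -> O x) ->
  (forall x, enorm (x - x2) <= r -> c * enorm (x - x2) <= enorm (z x - z x2)) ->
  enorm (w - z x2) < c * r / 2 ->
  exists xm, [/\ O xm, enorm (xm - x2) <= r & z xm = w].
Proof.
move=> r0 c0 dz detz KO low wclose.
pose K := [set x | enorm (x - x2) <= r].
have K0 : K !=set0 by exists x2; rewrite /K /= subrr enorm0 ltW.
have Cp := Cd_gt0.
have cK : compact K.
  apply: bounded_closed_compact.
    exists (`|x2| + r); split; first exact: num_real.
    move=> M hM x Kx /=.
    apply: le_trans (ltW hM).
    have -> : x = (x - x2) + x2 by rewrite subrK.
    apply: le_trans (ler_normD _ _) _; rewrite addrC lerD2l.
    exact: le_trans (mxnorm_le_enorm _) Kx.
  have -> : K = ~` [set x | r < enorm (x - x2)].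
    by rewrite predeqE => x; rewrite /K /= real_leNgt ?num_real //; split => /negP.
  rewrite closedC openE => x /= hx; apply/nbhs_ballP.
  exists ((enorm (x - x2) - r) / Cd); first by rewrite /= divr_gt0 // subr_gt0.
  move=> y; rewrite -ball_normE /= => hy.
  have := enormBtri x y x2.
  have := enorm_le_mxnorm (x - y); move: hy; rewrite ltr_pdivlMr // => hy.
  move: hy hx; lra.
have gc : forall u0 : V, {for u0, continuous (fun u => enorm (u - w))}.
  move=> u0 B /nbhs_ballP [e e0 eB]; apply/nbhs_ballP.
  exists (e / Cd); first by rewrite /= divr_gt0.
  move=> u; rewrite -ball_normE /= => hu; apply: eB.
  rewrite -ball_normE /=.
  apply: le_lt_trans (enorm_lip _ _) _.
  have -> : u0 - w - (u - w) = u0 - u by rewrite opprB addrA subrK.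
  apply: le_lt_trans (enorm_le_mxnorm _) _.
  by rewrite -ltr_pdivlMl // mulrC.
have cont : {within K, continuous (fun x => enorm (z x - w))}.
  apply: continuous_in_subspaceT => x; rewrite inE => Kx.
  apply: (continuous_comp (f := z) (g := fun u => enorm (u - w))).
    exact: differentiable_continuous (dz x (KO x Kx)).
  exact: gc.
have [xm] := EVT_min_rV K0 cK cont.
rewrite inE => Kxm hm.
have hm' : forall y, K y -> enorm (z xm - w) <= enorm (z y - w).
  by move=> y Ky; apply: hm; rewrite inE.
have lt_r : enorm (xm - x2) < r.
  have h1 := low xm Kxm.
  have h2 := enormBtri (z xm) w (z x2).
  have h3 := hm' x2 (ltac:(by rewrite /K /= subrr enorm0 ltW)).
  rewrite (enormB (z x2)) in h3.
  have h4 : c * enorm (xm - x2) < c * r by move: h1 h2 h3 wclose; lra.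
  by rewrite -(ltr_pM2l c0).
exists xm; split => //; first exact: KO.
apply: (@local_min_zero z xm w (r - enorm (xm - x2))).
- exact: dz (KO _ Kxm).
- exact: detz (KO _ Kxm).
- by rewrite subr_gt0.
move=> y hy; apply: hm'; rewrite /K /=.
have := enormBtri y xm x2; move: hy; lra.
Qed.

End Enorm.

Theorem proposition3p10 (R : realType) (d : nat) (O : set 'rV[R]_d)
  (L alpha delta M1 M2 rho : R) :
  lipschitz_domain L O ->
  0 < alpha -> alpha <= 1 -> 0 < delta -> 0 < M1 -> 0 < M2 ->
  0 < rho -> injectivity_radius O L alpha delta M1 M2 rho ->
  forall gamma : R, 0 < gamma -> gamma < rho / 2 ->
  exists lambda : R, 0 < lambda /\
    forall y z : 'rV[R]_d -> 'rV[R]_d,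
      admissible O alpha delta M1 M2 y ->
      admissible O alpha delta M1 M2 z ->
      (forall x, O x -> enorm (y x - z x) <= lambda) ->
      Ptilde O rho gamma y `<=` P0 O rho z.
Proof.
move=> [oO _ _ _] alpha0 alpha1 delta0 M10 M20 rho0 inj gamma g0 grho.
pose c := 2^-1 * (delta / M1 ^+ d.-1).
have c0 : 0 < c by rewrite /c mulr_gt0 ?invr_gt0 // divr_gt0 // exprn_gt0.
pose r := gamma / 2.
have r0 : 0 < r by rewrite /r divr_gt0.
exists (c * r / 8); split; first by rewrite divr_gt0 // mulr_gt0.
move=> y z Hy Hz Hyz x1 [Ox1 [x2 [Ox2 [eta [geta Hb]] yx12 far]]].
have [dz detz _ _] := Hz.
have detz' : forall x, O x -> \det (grad z x) != 0.
  by move=> x Ox; apply: lt0r_neq0; apply: lt_le_trans delta0 (detz x Ox).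
have reta : r < eta by rewrite /r; lra.
have KO : forall x, enorm (x - x2) <= r -> O x.
  by move=> x hx; apply: (@ball_sub_O R d O x2 x eta r oO Ox2 Hb reta hx).
have low : forall x, enorm (x - x2) <= r -> c * enorm (x - x2) <= enorm (z x - z x2).
  move=> x hx.
  have hxr : eball x2 rho x by rewrite /eball /=; move: hx; rewrite /r; lra.
  have hx2 : eball x2 rho x2 by rewrite /eball /= subrr enorm0.
  by have [] := inj z Hz x2 (subset_closure Ox2) x x2 (KO x hx) Ox2 hxr hx2.
have wclose : enorm (z x1 - z x2) < c * r / 2.
  have h1 := @enormBtri R d (z x1) (y x1) (z x2).
  rewrite (@enormB R d (z x1) (y x1)) in h1.
  have h2 := Hyz x1 Ox1.
  have h3 := Hyz x2 Ox2; rewrite -yx12 in h3.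
  have : c * r / 8 < c * r / 2 by have := mulr_gt0 c0 r0; lra.
  lra.
have [xm [Oxm hxm zxm]] := @ball_image R d O z x2 (z x1) r c r0 c0 dz detz' KO low wclose.
split => //; exists xm; split => //.
have := @enormBtri R d x1 xm x2; move: far hxm; rewrite /r; lra.
Qed.
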